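(* Let $M$ be a locally isotropic pseudo-Riemannian manifold, $P\in M$, and $S\in\mathcal{P}_P$. Then $S(v)$ is nilpotent for every $v\in\mathcal{N}=\{v\in T_PM:(v,v)=0\}$.
   Context: $M$ is locally isotropic if for every $P\in M$ and all nonzero $x,y\in T_PM$ with $(x,x)=(y,y)$ there is a local isometry of $M$ fixing $P$ whose differential at $P$ maps $x$ to $y$. $\mathcal{P}_P$ is the set of maps $S:T_PM\to\mathrm{Hom}(T_PM,T_PM)$ such that: (i) each $S(v)$ is self-adjoint for $(\cdot,\cdot)$; (ii) $S(v)v=0$; (iii) $S(-v)=-S(v)$; (iv) for every local isometry of $M$ fixing $P$ with differential $T$ at $P$, $S(Tv)=T\circ S(v)\circ T^{-1}$ for all $v$; (v) in any basis $e_1,\dots,e_m$ of $T_PM$, $S(\sum v_ie_i)$ is a polynomial in $v_1,\dots,v_m$ with coefficients in $\mathrm{Hom}(T_PM,T_PM)$. *)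

(* Defs.v *)
(* Linear-algebraic model of the data at a point P of a
   pseudo-Riemannian manifold. *)
From HB Require Import structures.
From mathcomp Require Import all_boot all_order all_algebra.
From mathcomp Require Import reals.
From mathcomp Require Import mpoly.
Set Implicit Arguments. Unset Strict Implicit. Unset Printing Implicit Defensive.
Import Order.TTheory GRing.Theory Num.Theory.
Local Open Scope ring_scope.

(* T_P M is modelled as 'rV[R]_m (coordinates in a fixed basis e_1..e_m);
   the metric (.,.) at P is given by its Gram matrix Q. Endomorphisms of
   T_P M are matrices acting on the right: x |-> x *m A. *)

Definition metric_form (R : realType) (m : nat) (Q : 'M[R]_m) (x y : 'rV[R]_m) : R :=
  (x *m Q *m y^T) 0 0.

Definition metric_matrix (R : realType) (m : nat) (Q : 'M[R]_m) : Prop :=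
  Q^T = Q /\ Q \in unitmx.

(* G = set of differentials at P of local isometries of M fixing P:
   invertible isometries of (T_P M, (.,.)), forming a group. *)
Definition isometry_group (R : realType) (m : nat) (Q : 'M[R]_m)
    (G : 'M[R]_m -> Prop) : Prop :=
  [/\ G 1%:M,
      (forall T, G T -> T \in unitmx /\
          forall x y, metric_form Q (x *m T) (y *m T) = metric_form Q x y),
      (forall T U, G T -> G U -> G (T *m U)) &
      (forall T, G T -> G (invmx T))].

Definition locally_isotropic_at (R : realType) (m : nat) (Q : 'M[R]_m)
    (G : 'M[R]_m -> Prop) : Prop :=
  forall x y : 'rV[R]_m, x != 0 -> y != 0 -> metric_form Q x x = metric_form Q y y ->
    exists T, G T /\ x *m T = y.

Definition self_adjoint (R : realType) (m : nat) (Q : 'M[R]_m) (A : 'M[R]_m) : Prop :=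
  forall x y, metric_form Q (x *m A) y = metric_form Q x (y *m A).

Definition polynomial_map (R : realType) (m : nat) (S : 'rV[R]_m -> 'M[R]_m) : Prop :=
  forall i j : 'I_m, exists p : {mpoly R[m]},
    forall v : 'rV[R]_m, S v i j = p.@[fun k => v 0 k].

Definition in_PP (R : realType) (m : nat) (Q : 'M[R]_m) (G : 'M[R]_m -> Prop)
    (S : 'rV[R]_m -> 'M[R]_m) : Prop :=
  [/\ (forall v, self_adjoint Q (S v)),
      (forall v, v *m S v = 0),
      (forall v, S (- v) = - S v),
      (forall T, G T -> forall v, S (v *m T) = invmx T *m S v *m T) &
      polynomial_map S].

Definition nilpotent (R : realType) (m : nat) (A : 'M[R]_m) : Prop :=
  exists k : nat, A ^+ k = 0.

(* Main.v *)
Require Import Defs.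
From HB Require Import structures.
From mathcomp Require Import all_boot all_order all_algebra.
From mathcomp Require Import reals.
From mathcomp Require Import mpoly.
From mathcomp Require Import lra.
Set Implicit Arguments. Unset Strict Implicit. Unset Printing Implicit Defensive.
Import Order.TTheory GRing.Theory Num.Theory.
Local Open Scope ring_scope.

Lemma mpoly_line (R : comNzRingType) n (p : {mpoly R[n]}) (w : 'I_n -> R) :
  exists q : {poly R}, forall t, q.[t] = p.@[fun k => t * w k].
Proof.
exists (\sum_(mm <- msupp p) (p@_mm * \prod_i (w i) ^+ mm i) *: 'X^(mdeg mm)).
move=> t; rewrite mevalE horner_sum; apply: eq_bigr => mm _.
rewrite hornerZ hornerXn -mulrA; congr (_ * _).
rewrite [RHS](eq_bigr (fun i => t ^+ mm i * w i ^+ mm i)); last first.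
  by move=> i _ /=; rewrite exprMn.
rewrite big_split /= mulrC; congr (_ * _).
by rewrite mdegE -prodrXr.
Qed.

Lemma poly_nz_roots (R : numFieldType) (p : {poly R}) :
  (forall t, t != 0 -> p.[t] = 0) -> p = 0.
Proof.
move=> H; apply/eqP; apply/negPn/negP => pn0.
suff: (size [seq (i.+1)%:R : R | i <- iota 0 (size p)] < size p)%N.
  by rewrite size_map size_iota ltnn.
apply: max_poly_roots => //.
  apply/allP => x /mapP [i _ ->]; apply/rootP/H; by rewrite pnatr_eq0.
rewrite map_inj_uniq ?iota_uniq //.
by move=> i j /eqP; rewrite eqr_nat => /eqP [].
Qed.
Lemma detpoly (R : comNzRingType) n (M : 'M[{poly R}]_n) (t : R) :
  (\det M).[t] = \det (map_mx (horner_eval t) M).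
Proof. by rewrite det_map_mx. Qed.

Lemma det_conj (R : fieldType) n (A T : 'M[R]_n) (l : R) : T \in unitmx ->
  \det (l%:M - invmx T *m A *m T) = \det (l%:M - A).
Proof.
move=> Tu.
have -> : l%:M - invmx T *m A *m T = invmx T *m (l%:M - A) *m T.
  by rewrite mulmxBr mulmxBl mul_mx_scalar -scalemxAl mulVmx // scalemx1.
rewrite !det_mulmx mulrC mulrA -det_mulmx mulmxV // det1 mul1r //.
Qed.

Theorem theorem4p1 (R : realType) (m : nat) (Q : 'M[R]_m)
    (G : 'M[R]_m -> Prop) (S : 'rV[R]_m -> 'M[R]_m) :
  metric_matrix Q ->
  isometry_group Q G ->
  locally_isotropic_at Q G ->
  in_PP Q G S ->
  forall v : 'rV[R]_m, metric_form Q v v = 0 -> nilpotent (S v).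
Proof.
move=> _ [G1 Gu GM GV] iso [Ssa Sv0 Sodd Sconj Spoly] v vnull.
have S0 : S 0 = 0.
  have h := Sodd 0; rewrite oppr0 in h.
  apply/matrixP => i j; move/matrixP: h => /(_ i j); rewrite !mxE => e.
  lra.
have [->|vn0] := eqVneq v 0; first by exists 1%N; rewrite expr1.
have conj t : t != 0 -> exists T, T \in unitmx /\ S (t *: v) = invmx T *m S v *m T.
  move=> tn0.
  have tv0 : t *: v != 0 by rewrite scaler_eq0 negb_or tn0.
  have : metric_form Q v v = metric_form Q (t *: v) (t *: v).
    rewrite vnull; move: vnull; rewrite /metric_form => vn; rewrite -!scalemxAl linearZ /= -scalemxAr 2!mxE vn !mulr0 //.
  case/(iso _ _ vn0 tv0) => T [GT vT].
  exists T; split; first by case: (Gu T GT).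
  by rewrite -vT Sconj.
have : forall ij : 'I_m * 'I_m, exists q : {poly R},
    forall t, q.[t] = S (t *: v) ij.1 ij.2.
  case=> i j; have [p Hp] := Spoly i j.
  have [q Hq] := mpoly_line p (fun k => v 0 k).
  exists q => t; rewrite Hp Hq /=; apply: meval_eq => k; by rewrite mxE.
case/fin_all_exists => q Hq.
pose M := \matrix_(i, j) q (i, j).
have key l : \det (l%:M - S v) = l ^+ m.
  pose D := \det ((l%:P)%:M - M).
  have HD t : D.[t] = \det (l%:M - S (t *: v)).
    rewrite detpoly; congr (\det _); apply/matrixP => i j.
    by rewrite !mxE rmorphB /= !horner_evalE hornerMn hornerC -(Hq (i, j)).
  have : D - (\det (l%:M - S v))%:P = 0.
    apply: poly_nz_roots => t tn0; rewrite hornerD hornerN hornerC HD.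
    have [T [Tu ->]] := conj t tn0; by rewrite det_conj // subrr.
  move/eqP; rewrite subr_eq0 => /eqP eD.
  have := HD 0; rewrite eD hornerC scale0r S0 subr0 det_scalar //.
have cp : char_poly (S v) = 'X^m.
  apply/eqP; rewrite -subr_eq0; apply/eqP/poly_nz_roots => t _.
  rewrite hornerD hornerN hornerXn /char_poly detpoly -(key t).
  apply/eqP; rewrite subr_eq0; apply/eqP.
  congr (\det _); apply/matrixP => i j.
  rewrite !mxE rmorphB /= !horner_evalE. by rewrite hornerMn hornerX hornerC.
move: (S v) cp; clear; case: m => [|n] A cpA.
  by exists 1%N; rewrite expr1 thinmx0.
exists n.+1; have := Cayley_Hamilton A.
by rewrite cpA rmorphXn /= horner_mx_X.
Qed.
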